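(* Let $n\ge 1$, $k\ge 2$, $m\ge 1$ be integers and let $P_* \in \mathrm{Hom}(\Gamma_{n,k},\mathcal{D}(\mathbb{R}^m,0))$ satisfy $D^{(1)}_0P_*^a = k^{-1}I$ and $D^{(1)}_0P_*^{b_i}=I$ for all $i=1,\dots,n$. Then there exists a $C^1_{loc}$-neighborhood $\mathcal{U}$ of $P_*$ in $\mathrm{Hom}(\Gamma_{n,k},\mathcal{D}(\mathbb{R}^m,0))$ such that $D^{(1)}_0P^{b_i} = I$ for all $P\in\mathcal{U}$ and all $i=1,\dots,n$.
   Context: $\Gamma_{n,k} = \langle a, b_1,\dots,b_n \mid a b_i a^{-1} = b_i^k,\ b_i b_j = b_j b_i\rangle$. $\mathcal{D}(\mathbb{R}^m,0)$ is the group of germs at $0$ of local diffeomorphisms of $\mathbb{R}^m$ fixing $0$; $D^{(1)}_0F$ is the derivative at $0$. The $C^1_{loc}$-topology on $\mathcal{D}(\mathbb{R}^m,0)$ is given by the pseudo-distance $d(F,G)=\|D^{(1)}_0F-D^{(1)}_0G\|$ (operator norm), and $\mathrm{Hom}(\Gamma_{n,k},\mathcal{D}(\mathbb{R}^m,0))$ carries the induced product topology (convergence of $P^\gamma$ for each $\gamma$). We write $P^\gamma=P(\gamma)$. *)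

(* Defs.v *)
From HB Require Import structures.
From mathcomp Require Import all_boot all_order all_algebra.
From mathcomp Require Import all_classical all_reals all_analysis.
Set Implicit Arguments. Unset Strict Implicit. Unset Printing Implicit Defensive.
Import Order.TTheory GRing.Theory Num.Theory.
Import numFieldNormedType.Exports.
Local Open Scope ring_scope.

(* Generators of Gamma_{n,k}: None = a, Some i = b_(i+1). *)
Definition gen (n : nat) := option 'I_n.
(* A word in the generators and their inverses: (g, true) = g^{-1}. *)
Definition word (n : nat) := seq (gen n * bool).

Section Germs.
Variables (R : realType) (m : nat).
Local Notation V := 'rV[R]_m.

Definition germ_eq (f g : V -> V) : Prop := \forall x \near (0 : V), f x = g x.

(* (f, g) represent a germ at 0 of a local diffeomorphism fixing 0, and its
   inverse germ: both fix 0, are differentiable near 0, and are mutually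
   inverse near 0. *)
Definition loc_diffeo_pair (f g : V -> V) : Prop :=
  f 0 = 0 /\ g 0 = 0 /\
  (\forall x \near (0 : V), differentiable f x) /\
  (\forall x \near (0 : V), differentiable g x) /\
  (\forall x \near (0 : V), g (f x) = x) /\
  (\forall x \near (0 : V), f (g x) = x).

(* A homomorphism Gamma_{n,k} -> D(R^m,0), given by representatives F g of
   the germs P^g of the generators and representatives G g of their inverses.
   Relations: a b_i a^{-1} = b_i^k  (equivalently a b_i = b_i^k a)
   and b_i b_j = b_j b_i, as germs at 0. *)
Definition is_hom (n k : nat) (F G : gen n -> V -> V) : Prop :=
  (forall g, loc_diffeo_pair (F g) (G g)) /\
  (forall i, germ_eq (F None \o F (Some i))
                     (fun x => iter k (F (Some i)) (F None x))) /\
  (forall i j, germ_eq (F (Some i) \o F (Some j)) (F (Some j) \o F (Some i))).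

Definition eval_word (n : nat) (F G : gen n -> V -> V) (w : word n) : V -> V :=
  foldr (fun (p : gen n * bool) acc => (if p.2 then G p.1 else F p.1) \o acc)
        id w.

End Germs.

(* Main.v *)
Require Import Defs.
From HB Require Import structures.
From mathcomp Require Import all_boot all_order all_algebra.
From mathcomp Require Import all_classical all_reals all_analysis.
From mathcomp Require Import ring lra.
Import Order.TTheory GRing.Theory Num.Theory.
Import numFieldNormedType.Exports.
Local Open Scope ring_scope.

Section Calc.
Variables (R : realType) (m : nat).
Local Notation V := 'rV[R]_m.

Lemma diff_near (f g : V -> V) : differentiable f 0 -> differentiable g 0 ->
  (\forall x \near (0:V), f x = g x) -> forall v, 'd f 0 v = 'd g 0 v.
Proof.
move=> df dg fg v.
have h1 := deriveE v df.
have h2 := deriveE v dg.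
have h3 : 'D_v f 0 = 'D_v g 0 by exact: near_eq_derive.
exact: (etrans (esym h1) (etrans h3 h2)).
Qed.

Lemma diff_iter (f : V -> V) : f 0 = 0 -> differentiable f 0 -> forall j,
  iter j f 0 = 0 /\ differentiable (iter j f) 0 /\
  forall v, 'd (iter j f) 0 v = iter j ('d f 0) v.
Proof.
move=> f0 df; elim=> [|j [h0 [hd hv]]].
  split => //; split; first exact: (@ex_diff _ _ _ _ _ id id _).
  move=> v /=. exact: (congr1 (fun h => h v) (@diff_val _ _ _ _ _ id id _)).
have df' : differentiable f (iter j f 0) by rewrite h0.
split; first by rewrite /= h0.
split; first by exact: (differentiable_comp hd df').
move=> v.
have h := congr1 (fun h => h v) (diff_comp hd df').
apply: (etrans h) => /=.
have h4 : 'd f (iter j f 0) = 'd f 0 by rewrite h0.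
change ('d f (iter j f 0) ('d (iter j f) 0 v) = 'd f 0 (iter j ('d f 0) v)).
apply: (etrans (congr1 (fun h : {linear V -> V} => h ('d (iter j f) 0 v)) h4)).
exact: (congr1 _ (hv v)).
Qed.

Lemma diff_comp0 (f g : V -> V) : g 0 = 0 -> differentiable g 0 -> differentiable f 0 ->
  differentiable (f \o g) 0 /\ forall v, 'd (f \o g) 0 v = 'd f 0 ('d g 0 v).
Proof.
move=> g0 dg df.
have df' : differentiable f (g 0) by rewrite g0.
split; first exact: (differentiable_comp dg df').
move=> v.
have h := congr1 (fun h => h v) (diff_comp dg df').
apply: (etrans h) => /=.
have h4 : 'd f (g 0) = 'd f 0 by rewrite g0.
change ('d f (g 0) ('d g 0 v) = 'd f 0 ('d g 0 v)).
exact: (congr1 (fun h : {linear V -> V} => h ('d g 0 v)) h4).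
Qed.

Lemma diff_inv (f g : V -> V) : loc_diffeo_pair f g ->
  (forall v, 'd f 0 ('d g 0 v) = v) /\ (forall v, 'd g 0 ('d f 0 v) = v).
Proof.
move=> [f0 [g0 [hdf [hdg [hgf hfg]]]]].
have df := nbhs_singleton hdf; have dg := nbhs_singleton hdg.
have did : differentiable (@id V) 0 by exact: (@ex_diff _ _ _ _ _ id id _).
have vid : forall v : V, 'd (@id V) 0 v = v.
  move=> v; exact: (congr1 (fun h => h v) (@diff_val _ _ _ _ _ id id _)).
split=> v.
  have [dc hc] := diff_comp0 f g g0 dg df.
  apply: (etrans (esym (hc v))); apply: (etrans _ (vid v)).
  exact: (diff_near _ _ dc did hfg v).
have [dc hc] := diff_comp0 g f f0 df dg.
apply: (etrans (esym (hc v))); apply: (etrans _ (vid v)).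
exact: (diff_near _ _ dc did hgf v).
Qed.

Lemma diff_rel (k : nat) (a b : V -> V) : a 0 = 0 -> b 0 = 0 ->
  differentiable a 0 -> differentiable b 0 ->
  germ_eq (a \o b) (fun x => iter k b (a x)) ->
  forall v, 'd a 0 ('d b 0 v) = iter k ('d b 0) ('d a 0 v).
Proof.
move=> a0 b0 da db hg v.
have [dc1 hc1] := diff_comp0 a b b0 db da.
have [i0 [di hi]] := diff_iter b b0 db k.
have [dc2 hc2] := diff_comp0 (iter k b) a a0 da di.
apply: (etrans (esym (hc1 v))).
apply: (etrans _ (etrans (hc2 v) (hi _))).
exact: (diff_near _ _ dc1 dc2 hg v).
Qed.
End Calc.
Section Key.
Variables (R : realType) (V : normedModType R).

Lemma iter_bounds (B : {linear V -> V}) (M : R) : 0 <= M -> M <= 1 ->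
  (forall v, `|B v - v| <= M * `|v|) -> forall v j,
  `|iter j B v - v| <= (2 ^+ j - 1) * M * `|v| /\
  `|iter j B v - v - j%:R *: (B v - v)| <= (j%:R * 2 ^+ j) * M ^+ 2 * `|v|.
Proof.
move=> M0 M1 hB v; elim=> [|j [hQ hP]].
  by rewrite /= subrr scale0r subr0 normr0 expr0 subrr !mul0r.
set x := iter j B v.
have hx : iter j.+1 B v = B x by [].
have p0 : 1 <= (2:R) ^+ j by rewrite exprn_ege1 // ler1n.
have n0 : 0 <= `|v| by [].
have hx1 : `|x| <= `|v| + `|x - v|.
  by rewrite -[x in `|x|](subrK v) addrC ler_normD.
have hBx := hB x.
split.
  have -> : iter j.+1 B v - v = (B x - x) + (x - v) by rewrite hx addrA subrK.
  apply: (le_trans (ler_normD _ _)).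
  have h1 : `|B x - x| <= M * (`|v| + (2 ^+ j - 1) * M * `|v|).
    apply: (le_trans hBx); apply: ler_wpM2l => //.
    by apply: (le_trans hx1); rewrite lerD2l.
  rewrite exprS.
  have hM : (2 ^+ j - 1) * M * `|v| * M <= (2 ^+ j - 1) * M * `|v|.
    by rewrite ler_piMr // !mulr_ge0 // subr_ge0.
  nra.
have -> : iter j.+1 B v - v - j.+1%:R *: (B v - v) =
   (B (x - v) - (x - v)) + (x - v - j%:R *: (B v - v)).
  rewrite hx [B (x - v)]raddfB -[j.+1]addn1 natrD scalerDl scale1r.
  set a := B x; set b := B v; set e := j%:R *: (b - v).
  rewrite [RHS]addrA subrK opprD opprB addrCA [a - v + _]addrA subrK addrC //.
apply: (le_trans (ler_normD _ _)).
have h1 : `|B (x - v) - (x - v)| <= M * ((2 ^+ j - 1) * M * `|v|).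
  by apply: (le_trans (hB _)); apply: ler_wpM2l.
have -> : (j.+1)%:R = (j%:R + 1 : R) by rewrite -natr1.
rewrite exprS.
have : 0 <= 2 ^+ j * M ^+ 2 * `|v| by rewrite !mulr_ge0 // exprn_ge0.
have : 0 <= j%:R * 2 ^+ j * M ^+ 2 * `|v| by rewrite !mulr_ge0 // exprn_ge0.
rewrite expr2 in hP *.
nra.
Qed.

Lemma geo_bound (j : nat) : (3/4 : R) ^+ j * (1 + j%:R / 3) <= 1.
Proof.
elim: j => [|j IH]; first by rewrite expr0 mul1r mul0r addr0.
have q1 : (3/4 : R) ^+ j <= 1 by rewrite exprn_ile1 //; lra.
have q0 : 0 <= (3/4 : R) ^+ j by rewrite exprn_ge0 //; lra.
have -> : (j.+1)%:R = (j%:R + 1 : R) by rewrite -natr1.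
rewrite exprS.
have -> : 3 / 4 * (3 / 4) ^+ j * (1 + (j%:R + 1) / 3) =
   3/4 * ((3/4 : R) ^+ j * (1 + j%:R / 3)) + (3/4 : R) ^+ j / 4 by field.
lra.
Qed.

Lemma key (k : nat) (A A' B : {linear V -> V}) (eps : R) :
  (2 <= k)%N -> 0 < eps -> eps * (2 * (k%:R + 2 + k%:R * 2 ^+ k)) <= 1 ->
  (forall v, `|A v - k%:R^-1 *: v| <= eps * `|v|) ->
  (forall v, `|A' v - k%:R *: v| <= eps * `|v|) ->
  (forall v, `|B v - v| <= eps * `|v|) ->
  (forall v, A (A' v) = v) ->
  (forall v, A (B v) = iter k B (A v)) ->
  forall v, B v = v.
Proof.
move=> k2 e0 ebd hA hA' hB hAA hrel.
have K2 : (2:R) <= k%:R by rewrite (ler_nat R 2 k).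
set K := k%:R in K2 ebd hA hA' *.
have K0 : 0 < K by lra.
set kinv := K^-1 in hA *.
have hk : K * kinv = 1 by rewrite /kinv divff // gt_eqF.
have ki0 : 0 < kinv by rewrite /kinv invr_gt0.
have ki2 : kinv <= 1/2 by nra.
have p0 : 0 <= (2:R) ^+ k by rewrite exprn_ge0.
set d := K * 2 ^+ k in ebd.
have d0 : 0 <= d by rewrite /d mulr_ge0 // ltW.
have e1 : eps <= 1/2 by nra.
have nA : forall x, `|A x| <= (kinv + eps) * `|x|.
  move=> x; have -> : A x = (A x - kinv *: x) + kinv *: x by rewrite subrK.
  apply: (le_trans (ler_normD _ _)); rewrite normrZ gtr0_norm // mulrDl.
  by rewrite addrC lerD2l.
have nA' : forall x, `|A' x| <= (K + eps) * `|x|.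
  move=> x; have -> : A' x = (A' x - K *: x) + K *: x by rewrite subrK.
  apply: (le_trans (ler_normD _ _)); rewrite normrZ gtr0_norm // mulrDl.
  by rewrite addrC lerD2l.
have step : forall M, 0 <= M -> M <= eps -> (forall v, `|B v - v| <= M * `|v|) ->
    forall v, `|B v - v| <= (3/4 * M) * `|v|.
  move=> M M0 Me hM v.
  have M1 : M <= 1 by lra.
  have [_ hP] := iter_bounds B M M0 M1 hM v k.
  set u := A' v.
  have eq1 : iter k B v - v = A (B u - u).
    have e2 := hrel u; have e3 := hAA v.
    rewrite [A (B u - u)]raddfB; congr (_ - _).
      by rewrite -e3; exact: (esym e2).
    exact: (esym e3).
  have h1 : `|A (B u - u)| <= (kinv + eps) * (M * ((K + eps) * `|v|)).
    apply: (le_trans (nA _)); apply: ler_wpM2l; first lra.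
    by apply: (le_trans (hM u)); apply: ler_wpM2l => //; apply: nA'.
  set w := B v - v in hP *.
  set y := iter k B v - v in eq1 hP *.
  have h2 : `|K *: w| <= `|y| + `|y - K *: w|.
    have := ler_normB y (y - K *: w).
    by rewrite [- (y - _)]opprB [y + (_ - y)]addrC subrK.
  rewrite normrZ gtr0_norm // in h2.
  rewrite {1}eq1 in h2.
  have n0 : 0 <= `|v| by [].
  have nw : 0 <= `|w| by [].
  have Mn : 0 <= M * `|v| by rewrite mulr_ge0.
  have X : (kinv + eps) * (K + eps) + d * M <= 3/4 * K.
    have : kinv * eps <= eps / 2 by nra.
    have : eps * eps <= eps / 2 by nra.
    have : d * M <= d * eps by nra.
    have : eps * (K + 2 + d) <= 1/2 by nra.
    nra.
  have h3 : K * `|w| <= K * (3/4 * M * `|v|).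
    apply: (le_trans h2).
    have Y : (kinv + eps) * (M * ((K + eps) * `|v|)) + d * M ^+ 2 * `|v|
         = ((kinv + eps) * (K + eps) + d * M) * (M * `|v|).
      by rewrite expr2; ring.
    apply: (le_trans (lerD h1 hP)); rewrite Y.
    have : ((kinv + eps) * (K + eps) + d * M) * (M * `|v|) <= 3/4 * K * (M * `|v|)
      by apply: ler_wpM2r.
    nra.
  by move: h3; rewrite ler_pM2l // mulrA.
have it : forall j v, `|B v - v| <= (eps * (3/4) ^+ j) * `|v|.
  elim=> [|j IH] v; first by rewrite expr0 mulr1.
  have q1 : (3/4 : R) ^+ j <= 1 by rewrite exprn_ile1 //; lra.
  have q0 : 0 <= (3/4 : R) ^+ j by rewrite exprn_ge0 //; lra.
  have := step (eps * (3/4) ^+ j) (mulr_ge0 (ltW e0) q0) _ IH v.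
  rewrite exprS mulrCA mulrA; apply; nra.
move=> v; apply/eqP; rewrite -subr_eq0 -normr_eq0.
set x := `|B v - v|.
have x0 : 0 <= x by exact: normr_ge0.
have n0 : 0 <= `|v| by [].
rewrite eq_le x0 andbT; apply/negP => /negP; rewrite -ltNge => xp.
set J := (Num.Def.trunc (3 * eps * `|v| / x)).+1.
have hJ : 3 * eps * `|v| / x < J%:R by apply: truncnS_gt.
rewrite ltr_pdivrMr // in hJ.
have hx := it J v.
have hg := geo_bound J.
have q0 : 0 <= (3/4 : R) ^+ J by rewrite exprn_ge0 //; lra.
have : x * (1 + J%:R / 3) <= eps * `|v| * ((3/4) ^+ J * (1 + J%:R / 3)).
  rewrite mulrA; apply: ler_wpM2r; first by rewrite addr_ge0 // divr_ge0.
  by rewrite mulrAC.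
have : eps * `|v| * ((3/4) ^+ J * (1 + J%:R / 3)) <= eps * `|v|.
  by rewrite ler_piMr // mulr_ge0 // ltW.
nra.
Qed.
End Key.

Theorem lemma2p2 (R : realType) (n k m : nat)
  (Hn : (1 <= n)%N) (Hk : (2 <= k)%N) (Hm : (1 <= m)%N)
  (Fs Gs : gen n -> 'rV[R]_m -> 'rV[R]_m) :
  is_hom k Fs Gs ->
  (forall v : 'rV[R]_m, 'd (Fs None) 0 v = k%:R^-1 *: v) ->
  (forall (i : 'I_n) (v : 'rV[R]_m), 'd (Fs (Some i)) 0 v = v) ->
  exists (W : seq (word n)) (eps : R), 0 < eps /\
    forall F G : gen n -> 'rV[R]_m -> 'rV[R]_m,
      is_hom k F G ->
      (forall w, w \in W -> forall v : 'rV[R]_m,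
          `|'d (eval_word F G w) 0 v - 'd (eval_word Fs Gs w) 0 v| <= eps * `|v|) ->
      forall (i : 'I_n) (v : 'rV[R]_m), 'd (F (Some i)) 0 v = v.
Proof.
move=> [hloc _] hFa hFb.
have K2 : (2:R) <= k%:R by rewrite (ler_nat R 2 k).
have K0 : (k%:R : R) != 0 by rewrite gt_eqF //; lra.
have p0 : 0 <= (2:R) ^+ k by rewrite exprn_ge0.
pose c : R := 2 * (k%:R + 2 + k%:R * 2 ^+ k).
have c0 : 0 < c by rewrite /c; nra.
exists [:: [:: (None,false)], [:: (None,true)] & [seq [:: (Some i, false)] | i <- enum 'I_n]], c^-1.
split; first by rewrite invr_gt0.
move=> F G [hlocF [hrelF _]] hW i v.
have [Fa0 [Ga0 [hdFa [hdGa _]]]] := hlocF None.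
have [Fb0 [_ [hdFb _]]] := hlocF (Some i).
have dFa := nbhs_singleton hdFa.
have dFb := nbhs_singleton hdFb.
have [inv1 _] := @diff_inv R m _ _ (hlocF None).
have rel := @diff_rel R m k (F None) (F (Some i)) Fa0 Fb0 dFa dFb (hrelF i).
have [_ invs] := @diff_inv R m _ _ (hloc None).
have hGs : forall w, 'd (Gs None) 0 w = k%:R *: w.
  move=> w.
  have e : 'd (Fs None) 0 (k%:R *: w) = w.
    by rewrite (hFa _) scalerA mulVf // scale1r.
  apply: (etrans (congr1 _ (esym e))); exact: invs.
have hA : forall w, `|'d (F None) 0 w - k%:R^-1 *: w| <= c^-1 * `|w|.
  move=> w.
  have m1 : [:: (None,false)] \in [:: [:: (None,false)], [:: (None,true)] & [seq [:: (Some i, false)] | i <- enum 'I_n]]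
    by rewrite in_cons eqxx.
  have := hW _ m1 w.
  change (`|'d (F None) 0 w - 'd (Fs None) 0 w| <= c^-1 * `|w| -> `|'d (F None) 0 w - k%:R^-1 *: w| <= c^-1 * `|w|).
  move=> H; exact: (eq_rect _ (fun z => `|'d (F None) 0 w - z| <= c^-1 * `|w|) H _ (hFa w)).
have hA' : forall w, `|'d (G None) 0 w - k%:R *: w| <= c^-1 * `|w|.
  move=> w.
  have m1 : [:: (None,true)] \in [:: [:: (None,false)], [:: (None,true)] & [seq [:: (Some i, false)] | i <- enum 'I_n]]
    by rewrite in_cons in_cons eqxx orbT.
  have := hW _ m1 w.
  change (`|'d (G None) 0 w - 'd (Gs None) 0 w| <= c^-1 * `|w| -> `|'d (G None) 0 w - k%:R *: w| <= c^-1 * `|w|).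
  move=> H; exact: (eq_rect _ (fun z => `|'d (G None) 0 w - z| <= c^-1 * `|w|) H _ (hGs w)).
have hB : forall w, `|'d (F (Some i)) 0 w - w| <= c^-1 * `|w|.
  move=> w.
  have m1 : [:: (Some i,false)] \in [:: [:: (None,false)], [:: (None,true)] & [seq [:: (Some i, false)] | i <- enum 'I_n]].
    rewrite in_cons; apply/orP; right; rewrite in_cons; apply/orP; right.
    by apply/mapP; exists i; rewrite ?mem_enum.
  have := hW _ m1 w.
  change (`|'d (F (Some i)) 0 w - 'd (Fs (Some i)) 0 w| <= c^-1 * `|w| -> `|'d (F (Some i)) 0 w - w| <= c^-1 * `|w|).
  move=> H; exact: (eq_rect _ (fun z => `|'d (F (Some i)) 0 w - z| <= c^-1 * `|w|) H _ (hFb i w)).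
have e0 : 0 < c^-1 by rewrite invr_gt0.
have e1 : c^-1 * c <= 1 by rewrite mulVf // gt_eqF.
exact: (@key R _ k ('d (F None) 0) ('d (G None) 0) ('d (F (Some i)) 0) (c^-1) Hk e0 e1 hA hA' hB inv1 rel v).
Qed.
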